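(* Let $A$ be an integral domain with field of fractions $F$. The following are equivalent: (1) $\Gamma(A)$ is path-connected. (2) For every Bézout point $x\in\mathbb{P}^1(F)$ there exist $a_0,\ldots,a_n\in A$ with $x=\infty\cdot S(a_n)S(a_{n-1})\cdots S(a_0)$. (3) Every Bézout pair satisfies a weak Euclidean algorithm. (4) $A$ is a $\mathrm{GE}_2$-ring. (5) Every Bézout point in $\mathbb{P}^1(F)$ admits a finite continued fraction expansion $a_0+\cfrac{1}{a_1+\cfrac{1}{\ddots+\cfrac{1}{a_n}}}$ with entries $a_i\in A$.
   Context: A unimodular row over $A$ is $(a,b)\in A^2$ with $aA+bA=A$. $\Gamma(A)$ is the graph whose vertices are classes of unimodular rows modulo multiplication by units, with $\{[u],[v]\}$ an edge iff the matrix with rows $u,v$ lies in $\mathrm{GL}_2(A)$. A Bézout pair is $(a,b)\in A^2\setminus\{(0,0)\}$ such that the ideal $\langle a,b\rangle$ is principal; a Bézout point is an element $a/b\in\mathbb{P}^1(F)=F\cup\{\infty\}$ with $(a,b)$ a Bézout pair. $\mathrm{GL}_2(A)$ acts on $\mathbb{P}^1(F)$ on the right by $q\cdot\begin{pmatrix}a&b\\c&d\end{pmatrix}=\frac{aq+c}{bq+d}$. $S(a)=\begin{pmatrix}a&1\\1&0\end{pmatrix}$. A pair $(a,b)$ satisfies a weak Euclidean algorithm if there exist $a_0,\ldots,a_n,r_0,\ldots,r_{n-1}\in A$ such that with $r_{-2}=a,r_{-1}=b,r_n=0$ one has $r_{k-2}=a_kr_{k-1}+r_k$ for $0\le k\le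 n$. $A$ is a $\mathrm{GE}_2$-ring if $\mathrm{GL}_2(A)$ is generated by elementary matrices and invertible diagonal matrices. *)

(* Defs.v *)
From HB Require Import structures.
From mathcomp Require Import all_boot all_order all_algebra.
Set Implicit Arguments. Unset Strict Implicit. Unset Printing Implicit Defensive.
Import Order.TTheory GRing.Theory Num.Theory.
Local Open Scope ring_scope.

Section Defs.
Variable A : idomainType.

Local Notation F := {fraction A}.
Definition frac_of (a : A) : F := @FracField.tofrac A a.

(* P^1(F) = F ∪ {∞}; None = ∞ *)
Definition P1 := option F.
Definition infty : P1 := None.

(* the point with homogeneous coordinates (x : y), for (x,y) <> (0,0) *)
Definition p1_of (x y : F) : P1 := if y == 0 then None else Some (x / y).

Definition p1_coords (q : P1) : F * F :=
  match q with Some z => (z, 1) | None => (1, 0) end.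

Definition mx2 (a b c d : A) : 'M[A]_2 :=
  \matrix_(i < 2, j < 2)
    if i == ord0 then (if j == ord0 then a else b) else (if j == ord0 then c else d).

Definition unimodular (u : A * A) : Prop :=
  exists x y : A, u.1 * x + u.2 * y = 1.

(* same vertex of Gamma(A): equal up to multiplication by a unit *)
Definition same_class (u v : A * A) : Prop :=
  exists c : A, c \is a GRing.unit /\ v = (c * u.1, c * u.2).

(* edge of Gamma(A) (independent of representatives) *)
Definition gamma_edge (u v : A * A) : Prop :=
  mx2 u.1 u.2 v.1 v.2 \in unitmx.

(* a path in Gamma(A) given by representatives w_0, ..., w_k *)
Fixpoint gamma_walk (w0 : A * A) (s : seq (A * A)) : Prop :=
  match s with
  | [::] => True
  | w1 :: s' => gamma_edge w0 w1 /\ gamma_walk w1 s'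
  end.

Definition Gamma_path_connected : Prop :=
  forall u v : A * A, unimodular u -> unimodular v ->
    exists (w0 : A * A) (s : seq (A * A)),
      unimodular w0 /\ (forall w, w \in s -> unimodular w) /\
      same_class u w0 /\ same_class v (last w0 s) /\ gamma_walk w0 s.

(* Bezout pairs: (a,b) <> (0,0) with <a,b> principal *)
Definition bezout_pair (a b : A) : Prop :=
  (a, b) <> (0, 0) /\
  exists d : A, forall z : A,
    (exists x y : A, z = a * x + b * y) <-> (exists w : A, z = d * w).

Definition frac_pt (a b : A) : P1 := p1_of (frac_of a) (frac_of b).

Definition bezout_point (x : P1) : Prop :=
  exists a b : A, bezout_pair a b /\ x = frac_pt a b.

(* right action of GL_2(A) on P^1(F):
   q . [[a,b],[c,d]] = (a q + c) / (b q + d) *)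
Definition p1_act (q : P1) (M : 'M[A]_2) : P1 :=
  let: (x, y) := p1_coords q in
  p1_of (frac_of (M ord0 ord0) * x + frac_of (M ord_max ord0) * y)
        (frac_of (M ord0 ord_max) * x + frac_of (M ord_max ord_max) * y).

Definition Smx (a : A) : 'M[A]_2 := mx2 a 1 1 0.

(* weak Euclidean algorithm; r k stands for r_{k-2} of the paper and q k for a_k *)
Definition weak_euclid (a b : A) : Prop :=
  exists (n : nat) (q r : nat -> A),
    r 0%N = a /\ r 1%N = b /\ r n.+2 = 0 /\
    forall k : nat, (k <= n)%N -> r k = q k * r k.+1 + r k.+2.

Definition elementary_mx (M : 'M[A]_2) : Prop :=
  exists x : A, M = mx2 1 x 0 1 \/ M = mx2 1 0 x 1.

Definition inv_diag_mx (M : 'M[A]_2) : Prop :=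
  exists u v : A, u \is a GRing.unit /\ v \is a GRing.unit /\ M = mx2 u 0 0 v.

Definition GE2_gen (M : 'M[A]_2) : Prop := elementary_mx M \/ inv_diag_mx M.

Definition GE2_ring : Prop :=
  forall M : 'M[A]_2, M \in unitmx ->
    exists s : seq 'M[A]_2,
      (forall g, g \in s -> GE2_gen g \/ GE2_gen (invmx g)) /\
      M = \prod_(g <- s) g.

(* P^1 arithmetic for continued fractions: 1/0 = ∞, 1/∞ = 0, a + ∞ = ∞ *)
Definition p1_inv (z : P1) : P1 :=
  match z with None => Some 0 | Some y => p1_of 1 y end.
Definition p1_addA (a : A) (z : P1) : P1 :=
  match z with None => None | Some y => Some (frac_of a + y) end.

(* cfrac a0 [:: a1; ...; an] = a0 + 1/(a1 + 1/( ... + 1/an)) *)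
Fixpoint cfrac (a0 : A) (s : seq A) : P1 :=
  match s with
  | [::] => Some (frac_of a0)
  | a1 :: s' => p1_addA a0 (p1_inv (cfrac a1 s'))
  end.

Definition cond2 : Prop :=
  forall x : P1, bezout_point x ->
    exists (n : nat) (a : nat -> A),
      x = p1_act infty (\prod_(i < n.+1) Smx (a (n - i)%N)).

Definition cond3 : Prop :=
  forall a b : A, bezout_pair a b -> weak_euclid a b.

Definition cond5 : Prop :=
  forall x : P1, bezout_point x ->
    exists (a0 : A) (s : seq A), x = cfrac a0 s.

End Defs.

(* Main.v *)
From HB Require Import structures.
From mathcomp Require Import all_boot all_order all_algebra.
From mathcomp Require Import ring.
Require Import Defs.
Set Implicit Arguments. Unset Strict Implicit. Unset Printing Implicit Defensive.
Import Order.TTheory GRing.Theory Num.Theory.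
Local Open Scope ring_scope.

Section S.
Variable A : idomainType.
Local Notation F := {fraction A}.
Local Notation mx2 := (@mx2 A).
Local Notation fr := (@frac_of A).

Lemma mx2E a b c d : [/\ (mx2 a b c d) ord0 ord0 = a, (mx2 a b c d) ord0 ord_max = b,
   (mx2 a b c d) ord_max ord0 = c & (mx2 a b c d) ord_max ord_max = d].
Proof. by rewrite !mxE. Qed.

Lemma mx2_inj a b c d a' b' c' d' : mx2 a b c d = mx2 a' b' c' d' ->
  [/\ a = a', b = b', c = c' & d = d'].
Proof.
move=> E; have [? ? ? ?] := mx2E a b c d; have [? ? ? ?] := mx2E a' b' c' d'.
split; congruence.
Qed.

Lemma mx2_eta (M : 'M[A]_2) : M = mx2 (M ord0 ord0) (M ord0 ord_max) (M ord_max ord0) (M ord_max ord_max).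
Proof.
apply/matrixP => i j; rewrite !mxE.
case: i => [[|[|i]] Hi]; case: j => [[|[|j]] Hj] //=; congr (M _ _); exact: val_inj.
Qed.

Lemma mx2_mul a b c d a' b' c' d' :
  mx2 a b c d *m mx2 a' b' c' d' = mx2 (a * a' + b * c') (a * b' + b * d') (c * a' + d * c') (c * b' + d * d').
Proof.
apply/matrixP => i j; rewrite !mxE !big_ord_recl big_ord0 !mxE /=.
case: i => [[|[|i]] Hi]; case: j => [[|[|j]] Hj] //=; by rewrite addr0.
Qed.

Lemma mx2_1 : (1%:M : 'M[A]_2) = mx2 1 0 0 1.
Proof.
apply/matrixP => i j; rewrite !mxE.
by case: i => [[|[|i]] Hi]; case: j => [[|[|j]] Hj].
Qed.

Lemma det_mx2 a b c d : \det (mx2 a b c d) = a * d - b * c.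
Proof.
rewrite (expand_det_row _ ord0) !big_ord_recl big_ord0 /cofactor !det_mx11 !mxE /=.
by rewrite !expr0 !expr1 addr0 mul1r mulN1r mulrN.
Qed.

Lemma unitmx2 a b c d : (mx2 a b c d \in unitmx) = (a * d - b * c \is a GRing.unit).
Proof. by rewrite unitmxE det_mx2. Qed.

Lemma fr_eq0 a : (fr a == 0) = (a == 0).
Proof. by rewrite /frac_of tofrac_eq0. Qed.
Lemma frM a b : fr (a * b) = fr a * fr b. Proof. exact: tofracM. Qed.
Lemma frD a b : fr (a + b) = fr a + fr b. Proof. exact: tofracD. Qed.
Lemma fr1 : fr 1 = 1. Proof. exact: tofrac1. Qed.
Lemma fr0 : fr 0 = 0. Proof. exact: tofrac0. Qed.
Lemma fr_inj a b : fr a = fr b -> a = b.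
Proof. by move/eqP; rewrite /frac_of tofrac_eq => /eqP. Qed.

Lemma p1_of_scale (c x y : F) : c != 0 -> p1_of (c * x) (c * y) = p1_of x y.
Proof.
move=> c0; rewrite /p1_of mulf_eq0 (negbTE c0) /=.
case: ifP => // y0; congr Some.
by rewrite invfM mulrACA divff // mul1r.
Qed.

Lemma p1_act_of (x y : F) (M : 'M[A]_2) : (x != 0) || (y != 0) ->
  p1_act (p1_of x y) M = p1_of (x * fr (M ord0 ord0) + y * fr (M ord_max ord0))
                               (x * fr (M ord0 ord_max) + y * fr (M ord_max ord_max)).
Proof.
move=> nz; rewrite /p1_act.
case: (eqVneq y 0) => [y0|y0].
  have nx : x != 0 by move: nz; rewrite y0 eqxx orbF.
  rewrite /p1_of y0 eqxx /= !mul0r !mulr0 !addr0 !mulr1.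
  by have := p1_of_scale (fr (M ord0 ord0)) (fr (M ord0 ord_max)) nx; rewrite /p1_of => ->.
have -> : p1_of x y = Some (x / y) by rewrite /p1_of (negbTE y0).
rewrite /=.
have [z ->] : exists z, x = z * y by exists (x / y); rewrite divfK.
rewrite mulfK // -(p1_of_scale _ _ y0); congr p1_of; ring.
Qed.

Lemma p1_act_infty (M : 'M[A]_2) :
  p1_act (infty A) M = p1_of (fr (M ord0 ord0)) (fr (M ord0 ord_max)).
Proof. by rewrite /p1_act /= !mulr1 !mulr0 !addr0. Qed.

Lemma mulmx2E (M N : 'M[A]_2) i j :
  (M *m N) i j = M i ord0 * N ord0 j + M i ord_max * N ord_max j.
Proof.
rewrite !mxE !big_ord_recl big_ord0 addr0.
by have -> : lift ord0 ord0 = ord_max :> 'I_2 by apply: val_inj.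
Qed.

Lemma p1_act_comp (M N : 'M[A]_2) : (M ord0 ord0 != 0) || (M ord0 ord_max != 0) ->
  p1_act (p1_act (infty A) M) N = p1_act (infty A) (M *m N).
Proof.
move=> nz; rewrite p1_act_infty p1_act_of; last by rewrite !fr_eq0.
by rewrite p1_act_infty !mulmx2E !frD !frM.
Qed.

Lemma p1_cross (a b c d : A) : (a != 0) || (b != 0) -> (c != 0) || (d != 0) ->
  p1_of (fr a) (fr b) = p1_of (fr c) (fr d) -> a * d = b * c.
Proof.
rewrite /p1_of !fr_eq0.
case: (eqVneq b 0) => [->|b0]; case: (eqVneq d 0) => [->|d0];
  rewrite ?eqxx ?(negbTE b0) ?(negbTE d0) //=.
- by rewrite !mulr0 mul0r.
move=> _ _ [] E; apply: fr_inj; rewrite !frM.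
have fb : fr b != 0 by rewrite fr_eq0.
have fd : fr d != 0 by rewrite fr_eq0.
have [t [ha hc]] : exists t, fr a = t * fr b /\ fr c = t * fr d.
  by exists (fr c / fr d); split; [rewrite -E divfK | rewrite divfK].
rewrite ha hc; ring.
Qed.

Lemma p1_scaleA (k a b : A) : k != 0 -> p1_of (fr (k * a)) (fr (k * b)) = p1_of (fr a) (fr b).
Proof. by move=> k0; rewrite !frM p1_of_scale // fr_eq0. Qed.


Local Notation Smx := (@Smx A).
Definition Rq (q : nat -> A) (n j : nat) : 'M[A]_2 := \prod_(i < j) Smx (q (n - i)%N).

Lemma SmxE c : [/\ Smx c ord0 ord0 = c, Smx c ord0 ord_max = 1,
   Smx c ord_max ord0 = 1 & Smx c ord_max ord_max = 0].
Proof. exact: mx2E. Qed.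

Lemma Smx_unit c : Smx c \in unitmx.
Proof. by rewrite /Defs.Smx unitmx2 mulr0 mul1r sub0r unitrN unitr1. Qed.

Lemma Rq0 q n : Rq q n 0 = 1%:M.
Proof. by rewrite /Rq big_ord0. Qed.

Lemma Rq_rec q n j : Rq q n j.+1 = Rq q n j *m Smx (q (n - j)%N).
Proof. by rewrite /Rq big_ord_recr mulmxE. Qed.

Lemma Rq_unit q n j : Rq q n j \in unitmx.
Proof.
elim: j => [|j IH]; first by rewrite Rq0 unitmx1.
by rewrite Rq_rec unitmx_mul IH Smx_unit.
Qed.

Lemma Rq_rec00 q n j : Rq q n j.+1 ord0 ord0 = Rq q n j ord0 ord0 * q (n - j)%N + Rq q n j ord0 ord_max.
Proof. by rewrite Rq_rec mulmx2E; have [-> _ -> _] := SmxE (q (n - j)%N); rewrite mulr1. Qed.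

Lemma Rq_rec01 q n j : Rq q n j.+1 ord0 ord_max = Rq q n j ord0 ord0.
Proof. by rewrite Rq_rec mulmx2E; have [_ -> _ ->] := SmxE (q (n - j)%N); rewrite mulr1 mulr0 addr0. Qed.

Lemma Rq0E q n : Rq q n 0 ord0 ord0 = 1 /\ Rq q n 0 ord0 ord_max = 0.
Proof. by rewrite Rq0 mx2_1; have [-> -> _ _] := mx2E (1 : A) 0 0 1. Qed.

Lemma unit_row_nz (M : 'M[A]_2) : M \in unitmx -> (M ord0 ord0 != 0) || (M ord0 ord_max != 0).
Proof.
rewrite [M in M \in _]mx2_eta unitmx2.
case: (eqVneq (M ord0 ord0) 0) => [->|//]; case: (eqVneq (M ord0 ord_max) 0) => [->|//].
by rewrite !mul0r subr0 unitr0.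
Qed.

Lemma p1_act_S z c : p1_act z (Smx c) = p1_addA c (p1_inv z).
Proof.
have [E1 E2 E3 E4] := SmxE c.
case: z => [y|] /=; rewrite /p1_act /= E1 E2 E3 E4 ?fr1 ?fr0.
  rewrite !mulr1 !mul1r ?mul0r ?mulr0 !addr0 /p1_of.
  case E: (y == 0) => /=; first by [].
  by congr Some; rewrite mulrDl mulfK ?E // mul1r.
by rewrite !mulr1 !mulr0 !addr0 /p1_of oner_eq0 divr1.
Qed.

Lemma mkseqS' (T : Type) (f : nat -> T) n : mkseq f n.+1 = f 0%N :: mkseq (fun i => f i.+1) n.
Proof. by rewrite /mkseq /= -[1%N]/(1+0)%N iotaDl -map_comp. Qed.

Lemma Rq_shift a n : Rq a n.+1 n.+2 = Rq (fun k => a k.+1) n n.+1 *m Smx (a 0%N).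
Proof.
rewrite Rq_rec subnn; congr (_ *m _).
apply: eq_bigr => i _; by rewrite subSn // -ltnS.
Qed.

Lemma cfrac_Rq n a : p1_act (infty A) (Rq a n n.+1) = cfrac (a 0%N) (mkseq (fun i => a i.+1) n).
Proof.
elim: n a => [|n IH] a.
  rewrite /Rq big_ord1 subn0 p1_act_infty /=; have [-> -> _ _] := SmxE (a 0%N).
  by rewrite /p1_of fr1 oner_eq0 divr1.
rewrite Rq_shift -p1_act_comp; last exact: unit_row_nz (Rq_unit _ _ _).
by rewrite IH p1_act_S mkseqS'.
Qed.

Lemma cond2_5 : cond2 A <-> cond5 A.
Proof.
split=> H x /H.
  by move=> [n [a ->]]; exists (a 0%N), (mkseq (fun i => a i.+1) n); exact: (cfrac_Rq n a).
move=> [a0 [s ->]]; exists (size s), (nth 0 (a0 :: s)).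
by have := cfrac_Rq (size s) (nth 0 (a0 :: s)); rewrite /= mkseq_nth => <-.
Qed.


Lemma euclid_rows n (q r : nat -> A) : r n.+2 = 0 ->
  (forall k : nat, (k <= n)%N -> r k = q k * r k.+1 + r k.+2) ->
  forall j, (j <= n.+1)%N ->
  r (n.+1 - j)%N = r n.+1 * Rq q n j ord0 ord0 /\ r (n.+2 - j)%N = r n.+1 * Rq q n j ord0 ord_max.
Proof.
move=> rn Hr; elim=> [|j IH] Hj.
  by have [-> ->] := Rq0E q n; rewrite !subn0 mulr1 mulr0.
have Hjn : (j <= n)%N by [].
have [IH1 IH2] := IH (ltnW Hj).
rewrite Rq_rec00 Rq_rec01 subSS.
have Hk := Hr (n - j)%N (leq_subr _ _).
split; last by rewrite -IH1 subSS subSn.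
have e1 : (n - j).+1 = (n.+1 - j)%N by rewrite subSn.
have e2 : (n - j).+2 = (n.+2 - j)%N by rewrite e1 -subSn // ltnW.
rewrite Hk e2 e1 IH1 IH2.
ring.
Qed.

Lemma bezout_nz (a b : A) : bezout_pair a b -> (a != 0) || (b != 0).
Proof.
move=> [nz _]; case: (eqVneq a 0) => [a0|//]; case: (eqVneq b 0) => [b0|//].
by exfalso; apply: nz; rewrite a0 b0.
Qed.

Lemma cond3_2 : cond3 A -> cond2 A.
Proof.
move=> H x [a [b [bp ->]]].
have [n [q [r [r0 [r1 [rn Hr]]]]]] := H a b bp.
have [E1 E2] := euclid_rows rn Hr (leqnn n.+1).
rewrite subnn r0 in E1; rewrite subSS subSnn r1 in E2.
exists n, q; rewrite -[\prod_(i < n.+1) _]/(Rq q n n.+1) p1_act_infty /frac_pt E1 E2 p1_scaleA //.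
apply/eqP => k0; move: (bezout_nz bp); by rewrite E1 E2 k0 !mul0r eqxx.
Qed.

Lemma unit_inv_row (P : 'M[A]_2) : P \in unitmx ->
  P ord0 ord0 * invmx P ord0 ord0 + P ord0 ord_max * invmx P ord_max ord0 = 1.
Proof.
move=> Pu; have := mulmxV Pu; rewrite mx2_1 => /(congr1 (fun M : 'M[A]_2 => M ord0 ord0)).
by rewrite mulmx2E; have [-> _ _ _] := mx2E (1 : A) 0 0 1.
Qed.

Lemma prop_row (a b p0 p1 s t : A) : a * p1 = b * p0 -> p0 * s + p1 * t = 1 ->
  a = (a * s + b * t) * p0 /\ b = (a * s + b * t) * p1.
Proof.
move=> E U; split.
  have -> : (a * s + b * t) * p0 = a * s * p0 + t * (b * p0) by ring.
  by rewrite -E -[LHS]mulr1 -U; ring.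
have -> : (a * s + b * t) * p1 = s * (a * p1) + b * t * p1 by ring.
by rewrite E -[LHS]mulr1 -U; ring.
Qed.

Lemma cond2_3 : cond2 A -> cond3 A.
Proof.
move=> H a b bp.
have [n [q E]] := H (frac_pt a b) (ex_intro _ a (ex_intro _ b (conj bp erefl))).
rewrite -[\prod_(i < n.+1) _]/(Rq q n n.+1) p1_act_infty /frac_pt in E.
set P := Rq q n n.+1 in E.
have Pu : P \in unitmx by exact: Rq_unit.
have X := p1_cross (bezout_nz bp) (unit_row_nz Pu) E.
have [Ea Eb] := prop_row X (unit_inv_row Pu).
set c := _ + _ in Ea Eb.
exists n, q, (fun k => if (k <= n.+1)%N then c * Rq q n (n.+1 - k) ord0 ord0 else 0).
split; first by rewrite /= subn0 -Ea.
split; first by rewrite /= subSS subn0 /P Rq_rec01 in Eb *; rewrite -Eb.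
split; first by rewrite ltnn.
move=> k Hk /=; rewrite (leq_trans Hk (leqnSn n)) ltnS Hk.
rewrite subSn // Rq_rec00 subKn // subSS.
have -> : (if (k.+2 <= n.+1)%N then c * Rq q n (n.+1 - k.+2) ord0 ord0 else 0)
          = c * Rq q n (n - k) ord0 ord_max.
  case: ltnP Hk => [kn _ | nk kn].
    by rewrite subSS; rewrite ltnS in kn; rewrite -(subnSK kn) Rq_rec01.
  have -> : k = n by apply/eqP; rewrite eqn_leq kn -ltnS nk.
  by rewrite subnn; have [_ ->] := Rq0E q n; rewrite mulr0.
ring.
Qed.


Definition GP (M : 'M[A]_2) := exists s : seq 'M[A]_2,
  (forall g, g \in s -> GE2_gen g) /\ M = \prod_(g <- s) g.

Lemma GP_mul M N : GP M -> GP N -> GP (M *m N).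
Proof.
move=> [s1 [H1 ->]] [s2 [H2 ->]]; exists (s1 ++ s2); split.
  by move=> g; rewrite mem_cat => /orP [/H1|/H2].
by rewrite big_cat mulmxE.
Qed.

Lemma GP_gen g : GE2_gen g -> GP g.
Proof. by move=> Hg; exists [:: g]; split; [move=> h; rewrite inE => /eqP -> | rewrite big_seq1]. Qed.

Lemma GP_E12 x : GP (mx2 1 x 0 1).
Proof. by apply: GP_gen; left; exists x; left. Qed.
Lemma GP_E21 x : GP (mx2 1 0 x 1).
Proof. by apply: GP_gen; left; exists x; right. Qed.
Lemma GP_D u v : u \is a GRing.unit -> v \is a GRing.unit -> GP (mx2 u 0 0 v).
Proof. by move=> uu vu; apply: GP_gen; right; exists u, v. Qed.

Lemma GP_S c : GP (Smx c).
Proof.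
have -> : Smx c = mx2 1 c 0 1 *m mx2 1 1 0 1 *m mx2 1 0 (-1) 1 *m mx2 1 1 0 1 *m mx2 (-1) 0 0 1.
  by rewrite !mx2_mul /Defs.Smx; congr Defs.mx2; ring.
apply: GP_mul; last by apply: GP_D; rewrite ?unitrN unitr1.
apply: GP_mul; last exact: GP_E12.
apply: GP_mul; last exact: GP_E21.
by apply: GP_mul; apply: GP_E12.
Qed.

Lemma GP_Rq q n j : GP (Rq q n j).
Proof.
elim: j => [|j IH]; last by rewrite Rq_rec; apply: GP_mul => //; apply: GP_S.
rewrite Rq0; exists [::]; split=> //; rewrite big_nil; reflexivity.
Qed.

Lemma cond2_4 : cond2 A -> GE2_ring A.
Proof.
move=> H M Mu.
suff [s [Hs ->]] : GP M by exists s; split => // g /Hs; left.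
have U := unit_inv_row Mu.
have bp : bezout_pair (M ord0 ord0) (M ord0 ord_max).
  split.
    move=> [E1 E2]; move: (unit_row_nz Mu); by rewrite E1 E2 eqxx.
  exists 1 => z; split; first by move=> _; exists z; rewrite mul1r.
  move=> _; exists (invmx M ord0 ord0 * z), (invmx M ord_max ord0 * z).
  by rewrite !mulrA -mulrDl U mul1r.
have [n [q E]] := H _ (ex_intro _ _ (ex_intro _ _ (conj bp erefl))).
rewrite -[\prod_(i < n.+1) _]/(Rq q n n.+1) p1_act_infty /frac_pt in E.
set P := Rq q n n.+1 in E.
have Pu : P \in unitmx by exact: Rq_unit.
have X := p1_cross (unit_row_nz Mu) (unit_row_nz Pu) E.
have [Ea Eb] := prop_row X (unit_inv_row Pu).
set c := _ + _ in Ea Eb.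
set N := M *m invmx P.
have EM : M = N *m P by rewrite /N mulmxKV.
have N01 : N ord0 ord_max = 0.
  rewrite /N mulmx2E Ea Eb -!mulrA -mulrDr.
  have := mulmxV Pu; rewrite mx2_1 => /(congr1 (fun M : 'M[A]_2 => M ord0 ord_max)).
  by rewrite mulmx2E; have [_ -> _ _] := mx2E (1 : A) 0 0 1; move->; rewrite mulr0.
have Nu : N \in unitmx by rewrite unitmx_mul Mu unitmx_inv.
rewrite EM; apply: GP_mul; last exact: GP_Rq.
have EN := mx2_eta N; rewrite N01 in EN.
have := Nu; rewrite [N in N \in _]EN unitmx2 mul0r subr0 unitrM => /andP [uu vu].
have -> : N = mx2 1 0 (N ord_max ord0 / N ord0 ord0) 1 *m mx2 (N ord0 ord0) 0 0 (N ord_max ord_max).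
  by rewrite {1}EN mx2_mul !mul1r !mul0r !mulr0 !addr0 !add0r divrK.
by apply: GP_mul; [apply: GP_E21 | apply: GP_D].
Qed.


Definition Sprod (l : seq A) : 'M[A]_2 := \prod_(c <- l) Smx c.

Lemma Sprod_nil : Sprod [::] = 1%:M.
Proof. by rewrite /Sprod big_nil; reflexivity. Qed.

Lemma Sprod_cons c l : Sprod (c :: l) = Smx c *m Sprod l.
Proof. by rewrite /Sprod big_cons mulmxE. Qed.

Lemma Sprod_unit l : Sprod l \in unitmx.
Proof.
elim: l => [|c l IH]; first by rewrite Sprod_nil unitmx1.
by rewrite Sprod_cons unitmx_mul Smx_unit IH.
Qed.

Definition NF (M : 'M[A]_2) := exists u v l,
  [/\ u \is a GRing.unit, v \is a GRing.unit & M = mx2 u 0 0 v *m Sprod l].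

Lemma SD c u v : v \is a GRing.unit ->
  Smx c *m mx2 u 0 0 v = mx2 v 0 0 u *m Smx (c * u / v).
Proof.
move=> vu; have e : v * (c * u / v) = c * u by rewrite mulrC divrK.
rewrite /Defs.Smx !mx2_mul e; congr Defs.mx2; ring.
Qed.

Lemma NF_S c X : NF X -> NF (Smx c *m X).
Proof.
move=> [u [v [l [uu vu ->]]]]; exists v, u, (c * u / v :: l); split => //.
by rewrite mulmxA SD // -mulmxA Sprod_cons.
Qed.

Lemma NF_D u' v' X : u' \is a GRing.unit -> v' \is a GRing.unit -> NF (mx2 u' 0 0 v') -> NF X ->
  NF (mx2 u' 0 0 v' *m X).
Proof.
move=> uu' vu' _ [u [v [l [uu vu ->]]]]; exists (u' * u), (v' * v), l; split; rewrite ?unitrM ?uu ?vu ?uu' ?vu' //.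
rewrite mulmxA mx2_mul; congr (Defs.mx2 _ _ _ _ *m _); ring.
Qed.

Lemma NF_gen g X : GE2_gen g -> NF X -> NF (g *m X).
Proof.
move=> [[x [->|->]]|[u [v [uu [vu ->]]]]] HX.
- have -> : mx2 1 x 0 1 = Smx x *m Smx 0 by rewrite /Defs.Smx mx2_mul; congr Defs.mx2; ring.
  by rewrite -mulmxA; apply: NF_S; apply: NF_S.
- have -> : mx2 1 0 x 1 = Smx 0 *m Smx x by rewrite /Defs.Smx mx2_mul; congr Defs.mx2; ring.
  by rewrite -mulmxA; apply: NF_S; apply: NF_S.
- by apply: NF_D => //; exists u, v, [::]; rewrite Sprod_nil mulmx1.
Qed.

Lemma inv_eq (h h' : 'M[A]_2) : h *m h' = 1%:M -> invmx h = h'.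
Proof.
move=> E; have hu := (mulmx1_unit E).1.
by rewrite -[invmx h]mulmx1 -E mulmxA mulVmx // mul1mx.
Qed.

Lemma NF_gen' g X : GE2_gen g \/ GE2_gen (invmx g) -> NF X -> NF (g *m X).
Proof.
move=> [Hg|Hg]; first exact: NF_gen.
rewrite -[g]invmxK; move: Hg; set h := invmx g => Hg.
apply: NF_gen; case: Hg => [[x [->|->]]|[u [v [uu [vu ->]]]]].
- left; exists (- x); left; apply: inv_eq; rewrite mx2_mul mx2_1; congr Defs.mx2; ring.
- left; exists (- x); right; apply: inv_eq; rewrite mx2_mul mx2_1; congr Defs.mx2; ring.
- right; exists u^-1, v^-1; split; rewrite ?unitrV //; split => //.
  apply: inv_eq; rewrite mx2_mul mx2_1 !mulrV // !mul0r !mulr0 !addr0 !add0r; done.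
Qed.

Lemma GE2_NF : GE2_ring A -> forall M, M \in unitmx -> NF M.
Proof.
move=> H M Mu; have [s [Hs ->]] := H M Mu.
elim: s Hs => [|g s IH] Hs.
  by exists 1, 1, [::]; split; rewrite ?unitr1 // big_nil Sprod_nil -mx2_1 mulmx1; reflexivity.
rewrite big_cons -mulmxE; apply: NF_gen'; first by apply: Hs; rewrite inE eqxx.
by apply: IH => h hs; apply: Hs; rewrite inE hs orbT.
Qed.

Definition rw (M : 'M[A]_2) : A * A := (M ord0 ord0, M ord0 ord_max).

Lemma rw_unimod M : M \in unitmx -> unimodular (rw M).
Proof. by move=> Mu; exists (invmx M ord0 ord0), (invmx M ord_max ord0); exact: unit_inv_row. Qed.

Lemma edge_S c Q : Q \in unitmx -> gamma_edge (rw (Smx c *m Q)) (rw Q).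
Proof.
rewrite [Q in Q \in _]mx2_eta unitmx2 => Qu.
rewrite /gamma_edge /rw /= !mulmx2E; have [-> -> _ _] := SmxE c.
rewrite unitmx2.
rewrite (_ : _ - _ = - (Q ord0 ord0 * Q ord_max ord_max - Q ord0 ord_max * Q ord_max ord0)) ?unitrN //.
ring.
Qed.

Lemma walk_Sprod l Q : Q \in unitmx -> exists s : seq (A * A),
  [/\ (forall w, w \in s -> unimodular w), last (rw (Sprod l *m Q)) s = rw Q &
      gamma_walk (rw (Sprod l *m Q)) s].
Proof.
move=> Qu; elim: l => [|c l [s [H1 H2 H3]]].
  by exists [::]; rewrite Sprod_nil mul1mx.
have Q'u : Sprod l *m Q \in unitmx by rewrite unitmx_mul Sprod_unit Qu.
exists (rw (Sprod l *m Q) :: s); split => //.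
- move=> w; rewrite inE => /orP [/eqP ->|/H1 //]; exact: rw_unimod.
- by rewrite Sprod_cons -mulmxA; split => //; apply: edge_S.
Qed.

Lemma NF_Gamma : (forall M, M \in unitmx -> NF M) -> Gamma_path_connected A.
Proof.
move=> H [a b] [a' b'] [x [y /= Hu]] [x' [y' /= Hv]].
set Mu := mx2 a b (- y) x; set Mv := mx2 a' b' (- y') x'.
have Muu : Mu \in unitmx by rewrite unitmx2 mulrN opprK Hu unitr1.
have Mvu : Mv \in unitmx by rewrite unitmx2 mulrN opprK Hv unitr1.
have Nu : Mu *m invmx Mv \in unitmx by rewrite unitmx_mul Muu unitmx_inv.
have [u [v [l [uu vu EN]]]] := H _ Nu.
have EMu : Mu = mx2 u 0 0 v *m (Sprod l *m Mv) by rewrite mulmxA -EN mulmxKV.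
have [s [H1 H2 H3]] := walk_Sprod l Mvu.
exists (rw (Sprod l *m Mv)), s; split.
  by apply: rw_unimod; rewrite unitmx_mul Sprod_unit Mvu.
split => //; split; last split => //.
  exists u^-1; split; first by rewrite unitrV.
  set X := Sprod l *m Mv in EMu *.
  have := congr1 (fun M : 'M[A]_2 => M ord0 ord0) EMu.
  have := congr1 (fun M : 'M[A]_2 => M ord0 ord_max) EMu.
  rewrite !mulmx2E; have [-> -> _ _] := mx2E u 0 0 v; have [-> -> _ _] := mx2E a b (-y) x.
  move=> -> ->; rewrite /rw /= !mul0r !addr0 !(mulKr uu); by rewrite /X !mulmx2E.
exists 1; split; first exact: unitr1.
rewrite H2 /rw; have [-> -> _ _] := mx2E a' b' (-y') x'; by rewrite !mul1r.
Qed.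

Definition Good (w : A * A) := exists l lam, lam \is a GRing.unit /\
  w = (lam * Sprod l ord0 ord0, lam * Sprod l ord0 ord_max).

Lemma Good_step w w' : Good w -> gamma_edge w w' -> Good w'.
Proof.
move=> [l [lam [lu ->]]]; case: w' => w1 w2; rewrite /gamma_edge /= => Gu.
have Pu : Sprod l \in unitmx by exact: Sprod_unit.
have G01 : (mx2 (lam * Sprod l ord0 ord0) (lam * Sprod l ord0 ord_max) w1 w2 *m invmx (Sprod l)) ord0 ord_max = 0.
  rewrite mulmx2E; have [-> -> _ _] := mx2E (lam * Sprod l ord0 ord0) (lam * Sprod l ord0 ord_max) w1 w2.
  rewrite -!mulrA -mulrDr.
  have := mulmxV Pu; rewrite mx2_1 => /(congr1 (fun M : 'M[A]_2 => M ord0 ord_max)).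
  by rewrite mulmx2E; have [_ -> _ _] := mx2E (1 : A) 0 0 1; move->; rewrite mulr0.
have EG : mx2 (lam * Sprod l ord0 ord0) (lam * Sprod l ord0 ord_max) w1 w2 =
   (mx2 (lam * Sprod l ord0 ord0) (lam * Sprod l ord0 ord_max) w1 w2 *m invmx (Sprod l)) *m Sprod l
  by rewrite mulmxKV.
have G'u : (mx2 (lam * Sprod l ord0 ord0) (lam * Sprod l ord0 ord_max) w1 w2 *m invmx (Sprod l)) \in unitmx
  by rewrite unitmx_mul Gu unitmx_inv.
move: (mx2 _ _ _ _ *m invmx (Sprod l)) G01 EG G'u => G' G01 EG G'u.
move: G'u; rewrite [G' in G' \in _]mx2_eta G01 unitmx2 mul0r subr0 unitrM => /andP [_ g11u].
have E1 := congr1 (fun M : 'M[A]_2 => M ord_max ord0) EG.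
have E2 := congr1 (fun M : 'M[A]_2 => M ord_max ord_max) EG.
have [_ _ e1 e2] := mx2E (lam * Sprod l ord0 ord0) (lam * Sprod l ord0 ord_max) w1 w2.
rewrite /= mulmx2E e1 in E1; rewrite /= mulmx2E e2 in E2.
exists (G' ord_max ord0 / G' ord_max ord_max :: l), (G' ord_max ord_max); split => //.
rewrite Sprod_cons !mulmx2E; have [-> -> _ _] := SmxE (G' ord_max ord0 / G' ord_max ord_max).
have e : G' ord_max ord_max * (G' ord_max ord0 / G' ord_max ord_max) = G' ord_max ord0.
  by rewrite mulrC divrK.
rewrite E1 E2 !mul1r !mulrDr ![G' ord_max ord_max * (_ / _ * _)]mulrA e.
by [].
Qed.

Lemma Good_walk s w0 : Good w0 -> gamma_walk w0 s -> Good (last w0 s).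
Proof.
elim: s w0 => [//|w1 s IH] w0 G0 /= [e W].
exact: IH (Good_step G0 e) W.
Qed.

Lemma Sprod_Rq l : exists n q, Sprod l = Rq q n n.+1.
Proof.
set l2 := l ++ [:: 0; 0].
have E : Sprod l = Sprod l2.
  rewrite /Sprod /l2 big_cat /= big_cons big_seq1 -!mulmxE.
  have -> : Smx 0 *m Smx 0 = 1%:M by rewrite /Defs.Smx mx2_mul mx2_1; congr Defs.mx2; ring.
  by rewrite mulmx1.
exists (size l).+1, (fun k => nth 0 l2 ((size l).+1 - k)%N).
have Hs : size l2 = (size l).+2 by rewrite /l2 size_cat addn2.
rewrite E /Sprod (big_nth 0) big_mkord Hs /Rq.
apply: eq_bigr => i _; rewrite subKn //; rewrite -ltnS; exact: ltn_ord.
Qed.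

Lemma Gamma_cond2 : Gamma_path_connected A -> cond2 A.
Proof.
move=> H x [a [b [[nz [d Hd]] ->]]].
have [a' ea] : exists a', a = d * a' by apply/(Hd a).1; exists 1, 0; rewrite mulr1 mulr0 addr0.
have [b' eb] : exists b', b = d * b' by apply/(Hd b).1; exists 0, 1; rewrite mulr1 mulr0 add0r.
have [x0 [y0 ed]] : exists x0 y0, d = a * x0 + b * y0 by apply/(Hd d).2; exists 1; rewrite mulr1.
have d0 : d != 0.
  by apply/eqP => d0; apply: nz; rewrite ea eb d0 !mul0r.
have um : unimodular (a', b').
  exists x0, y0; apply: (mulfI d0); rewrite /= mulr1 mulrDr !mulrA -ea -eb; exact/esym.
have u1 : unimodular (1 : A, 0 : A) by exists 1, 0; rewrite /= mulr1 mulr0 addr0.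
have [w0 [s [_ [_ [[c [cu e0]] [[c' [c'u el]] W]]]]]] := H _ _ u1 um.
have G0 : Good w0 by exists [::], c; split => //; rewrite e0 Sprod_nil mx2_1; have [-> -> _ _] := mx2E (1 : A) 0 0 1.
have [l [lam [lu El]]] := Good_walk G0 W.
rewrite El in el; case: el => el1 el2.
have [n [q Eq]] := Sprod_Rq l.
exists n, q; rewrite -[\prod_(i < n.+1) _]/(Rq q n n.+1) -Eq p1_act_infty.
have lam0 : lam != 0 by apply/eqP => l0; rewrite l0 unitr0 in lu.
have c'0 : c' != 0 by apply/eqP => l0; rewrite l0 unitr0 in c'u.
by rewrite /frac_pt ea eb p1_scaleA // -(p1_scaleA a' b' c'0) -el1 -el2 p1_scaleA.
Qed.

End S.

Theorem corollary3p11 (A : idomainType) :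
  [<-> Gamma_path_connected A; cond2 A; cond3 A; GE2_ring A; cond5 A].
Proof.
tfae.
- exact: Gamma_cond2.
- exact: cond2_3.
- by move=> H; apply: cond2_4; apply: cond3_2.
- by move=> H; apply/cond2_5; apply: Gamma_cond2; apply: NF_Gamma; apply: GE2_NF.
- by move=> H; apply: NF_Gamma; apply: GE2_NF; apply: cond2_4; apply/cond2_5.
Qed.
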